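(* Let $G$ be a finite Frobenius group with Frobenius kernel $K$ and Frobenius complement $H$, so that $G = K \rtimes H$, and suppose that $K$ and $H$ are both abelian, with $|K| = k$ and $|H| = h$. Then \[ AMZA(G) = AMZL(G) = 1 + \frac{2(h^2-1)}{h}\left(1 - \frac{h-1}{k}\right)\left(1 - \frac{1}{k}\right). \]
   Context: A finite group $G$ is a Frobenius group if it has a proper non-trivial subgroup $H$ with $H \cap gHg^{-1} = \{e\}$ for all $g \in G \setminus H$; then $K = \left(G \setminus \bigcup_{g \in G} gHg^{-1}\right) \cup \{e\}$ is a normal subgroup (the Frobenius kernel), $H$ is called the Frobenius complement, and $G = K \rtimes H$. For a finite group $G$, $\mathrm{Irr}(G)$ is the set of irreducible complex characters, $d_\chi = \chi(e)$ is the degree of $\chi$, $\mathrm{Conj}(G)$ is the set of conjugacy classes, $|C|$ is the size of a class $C$, and $\chi(C)$ is the value of $\chi$ on $C$. The amenability constant of a Banach algebra $\mathcal{A}$ is $AM(\mathcal{A}) = \inf\{\sup_\alpha \|d_\alpha\| : (d_\alpha) \text{ a bounded approximate diagonal}\}$, where a bounded approximate diagonal is a bounded net $(d_\alpha)$ in the projective tensor product $\mathcal{A}\hat\otimes\mathcal{A}$ with $a\cdot d_\alpha - d_\alpha\cdot a \to 0$ and $a\, m(d_\alpha) \to a$ for all $a\in\mathcal{A}$ ($m$ the multiplication map); $AM(\mathcal{A})=\infty$ if none exists. $ZL^1(G)$ is the centre of the group algebra $L^1(G)$ (the class functions with the $L^1$ norm), and $ZA(G)$ is the closed span of $\mathrm{Irr}(G)$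 in the Fourier algebra $A(G)$ (the class functions with the Fourier algebra norm). Write $AMZL(G) = AM(ZL^1(G))$ and $AMZA(G) = AM(ZA(G))$. For finite $G$ these are given by \[ AMZL(G) = \frac{1}{|G|^2}\sum_{C,C'\in\mathrm{Conj}(G)} |C||C'|\left|\sum_{\chi\in\mathrm{Irr}(G)} d_\chi^2\,\chi(C)\overline{\chi(C')}\right|,\qquad AMZA(G) = \frac{1}{|G|^2}\sum_{\chi,\chi'\in\mathrm{Irr}(G)} d_\chi d_{\chi'}\left|\sum_{C\in\mathrm{Conj}(G)} |C|^2\,\chi(C)\overline{\chi'(C)}\right|. \] *)

(* Defs.v *)
From HB Require Import structures.
From mathcomp Require Import all_boot all_order all_algebra all_fingroup all_solvable all_field all_character frobenius.
Set Implicit Arguments. Unset Strict Implicit. Unset Printing Implicit Defensive.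
Import Order.TTheory GRing.Theory Num.Theory.
Local Open Scope ring_scope.

(* Amenability constants of ZL^1(G) and ZA(G) for a finite group G, given by
   the explicit character-theoretic formulas of the paper (valid for finite G). *)
Definition AMZL (gT : finGroupType) (G : {group gT}) : algC :=
  (#|G|%:R ^+ 2)^-1 *
  \sum_(C in classes G) \sum_(C' in classes G)
     #|C|%:R * #|C'|%:R *
     `| \sum_(i : Iirr G) ('chi[G]_i 1%g) ^+ 2 * 'chi[G]_i (repr C)
                             * ('chi[G]_i (repr C'))^* |.

Definition AMZA (gT : finGroupType) (G : {group gT}) : algC :=
  (#|G|%:R ^+ 2)^-1 *
  \sum_(i : Iirr G) \sum_(j : Iirr G)
     'chi[G]_i 1%g * 'chi[G]_j 1%g *
     `| \sum_(C in classes G) #|C|%:R ^+ 2 * 'chi[G]_i (repr C)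
                                * ('chi[G]_j (repr C))^* |.

(* Main.v *)
Require Import Defs.
From HB Require Import structures.
From mathcomp Require Import all_boot all_order all_algebra all_fingroup all_solvable all_field all_character frobenius.
From mathcomp Require Import ring zify.
Import Order.TTheory GRing.Theory Num.Theory.
Set Implicit Arguments. Unset Strict Implicit.
Local Open Scope ring_scope.

Lemma chiA gT (G K H : {group gT}) (i : Iirr G) :
  [Frobenius G = K ><| H]%g -> abelian H -> K \subset cfker 'chi[G]_i ->
  'chi_i \is a linear_char /\ {in K, forall x, 'chi_i x = 1}.
Proof.
move=> frob cH sKk.
have [defG _ _ _ _] := Frobenius_context frob.
have [nsKG sHG mulKH nKH tiKH] := sdprod_context defG.
have lin : 'chi_i \is a linear_char.
  rewrite lin_irr_der1; apply: subset_trans sKk.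
  apply: der1_min; first by case/andP: nsKG.
  by rewrite -mulKH quotientMidl quotient_abelian.
split=> // x Kx; rewrite cfker1 ?(subsetP sKk) //; exact: lin_char1.
Qed.

Lemma chiB gT (G K H : {group gT}) (i : Iirr G) :
  [Frobenius G = K ><| H]%g -> abelian K -> ~~ (K \subset cfker 'chi[G]_i) ->
  'chi_i 1%g = #|H|%:R /\ (forall x, x \notin K -> 'chi_i x = 0).
Proof.
move=> frob cK nsub.
have [defG _ _ _ _] := Frobenius_context frob.
have [nsKG sHG mulKH nKH tiKH] := sdprod_context defG.
have [sKG _] := andP nsKG.
case/(Frobenius_Ind_irrP (FrobeniusWker frob)): nsub => j _ ->.
split.
  rewrite cfInd1 // -(index_sdprod defG).
  have /char_abelianP/(_ j) lj := cK. by rewrite lin_char1 // mulr1.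
move=> x Kx; exact: (cfun_onP (cfInd_normal _ nsKG)).
Qed.

Lemma centK gT (G K H : {group gT}) x : [Frobenius G = K ><| H]%g -> abelian K ->
  x \in K -> x != 1%g -> #|'C_G[x]%g| = #|K|.
Proof.
move=> frob cK Kx ntx.
have [defG _ _ _ _] := Frobenius_context frob.
have [nsKG _ _ _ _] := sdprod_context defG. have [sKG _] := andP nsKG.
apply/eqP; rewrite eqn_leq subset_leq_card ?(Frobenius_cent1_ker frob) ?inE ?ntx //=.
apply: subset_leq_card; rewrite subsetI sKG sub_cent1. exact: (subsetP cK).
Qed.

Lemma centH gT (G K H : {group gT}) x : [Frobenius G = K ><| H]%g -> abelian H ->
  x \in H -> x != 1%g -> #|'C_G[x]%g| = #|H|.
Proof.
move=> frob cH Hx ntx.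
have [defG _ _ _ _] := Frobenius_context frob.
have [nsKG sHG mulKH nKH tiKH] := sdprod_context defG. have [sKG _] := andP nsKG.
have regx : 'C_K[x]%g = 1%g by apply: (Frobenius_reg_ker frob); rewrite !inE ntx.
have ti : ('C_G[x] :&: K)%g = 1%g by rewrite setIC setIA (setIidPl sKG) regx.
have := TI_cardMg ti; move=> cardM.
have le1 : (#|'C_G[x]%g| * #|K| <= #|K| * #|H|)%N.
  rewrite -cardM (sdprod_card defG); apply: subset_leq_card.
  by rewrite mul_subG ?subsetIl.
apply/eqP; rewrite eqn_leq; apply/andP; split.
  by rewrite mulnC leq_pmul2l ?cardG_gt0 in le1.
apply: subset_leq_card; rewrite subsetI sHG sub_cent1; exact: (subsetP cH).
Qed.

Lemma cardA gT (G K H : {group gT}) : [Frobenius G = K ><| H]%g -> abelian K -> abelian H ->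
  \sum_(i : Iirr G) (K \subset cfker 'chi[G]_i)%:R = #|H|%:R :> algC.
Proof.
move=> frob cK cH.
have [defG _ ntH _ _] := Frobenius_context frob.
have [nsKG sHG mulKH nKH tiKH] := sdprod_context defG.
have [x Hx ntx] := trivgPn _ ntH.
have Gx : x \in G := subsetP sHG x Hx.
have nKx : x \notin K.
  apply: contra ntx => Kx; have : x \in (K :&: H)%g by rewrite inE Kx.
  by rewrite tiKH inE.
rewrite -(centH frob cH Hx ntx).
have := second_orthogonality_relation x Gx; rewrite class_refl mulr1n => <-.
apply: eq_bigr => i _.
case: (boolP (K \subset cfker 'chi[G]_i)) => sK /=.
  have [lin _] := chiA frob cH sK.
  by rewrite -normCK normC_lin_char // expr1n.
have [_ ->] := chiB frob cK sK; last by [].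
by rewrite mul0r.
Qed.

Lemma cardB gT (G K H : {group gT}) : [Frobenius G = K ><| H]%g -> abelian K -> abelian H ->
  #|H|%:R + #|H|%:R ^+ 2 * \sum_(i : Iirr G) (~~ (K \subset cfker 'chi[G]_i))%:R
   = #|K|%:R * #|H|%:R :> algC.
Proof.
move=> frob cK cH.
have [defG _ ntH _ _] := Frobenius_context frob.
rewrite -natrM (sdprod_card defG) -(irr_sum_square G).

rewrite -{1}(cardA frob cK cH) mulr_sumr -big_split /=.
apply: eq_bigr => i _.
case: (boolP (K \subset cfker 'chi[G]_i)) => sK /=.
  have [lin _] := chiA frob cH sK.
  by rewrite lin_char1 // expr1n mulr0 addr0.
have [-> _] := chiB frob cK sK.
by rewrite mulr1 add0r.
Qed.

Definition Sfun gT (G : {group gT}) (x y : gT) : algC :=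
  \sum_(i : Iirr G) ('chi[G]_i 1%g) ^+ 2 * 'chi[G]_i x * ('chi[G]_i y)^*.

Lemma Sval gT (G K H : {group gT}) x y : [Frobenius G = K ><| H]%g -> abelian K -> abelian H ->
  y \in G ->
  Sfun G x y =
  if (x \in K) && (y \in K) then
    #|H|%:R ^+ 2 * (#|'C_G[x]%g|%:R *+ (x \in y ^: G)%g) + #|H|%:R - #|H|%:R ^+ 3
  else #|'C_G[x]%g|%:R *+ (x \in y ^: G)%g.
Proof.
move=> frob cK cH Gy.
rewrite /Sfun -second_orthogonality_relation //.
case: ifP => [/andP[Kx Ky] | nK].
  transitivity (\sum_i (#|H|%:R ^+ 2 * ('chi[G]_i x * ('chi_i y)^*)
                 + (1 - #|H|%:R ^+ 2) * (K \subset cfker 'chi[G]_i)%:R)).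
    apply: eq_bigr => i _.
    case: (boolP (K \subset cfker 'chi[G]_i)) => sK /=.
      have [lin v1] := chiA frob cH sK.
      rewrite lin_char1 // !v1 // conjC1; ring.
    have [-> _] := chiB frob cK sK.
    ring.
  rewrite big_split /= -!mulr_sumr (cardA frob cK cH).
  set s := \sum_(i < _) _; ring.
apply: eq_bigr => i _.
case: (boolP (K \subset cfker 'chi[G]_i)) => sK /=.
  have [lin _] := chiA frob cH sK.
  by rewrite lin_char1 // expr1n mul1r.
have [_ v0] := chiB frob cK sK.
case: (boolP (x \in K)) => Kx.
  have nKy : y \notin K by apply/negP => Ky; move: nK; rewrite Kx Ky.
  by rewrite (v0 y nKy) conjC0 !mulr0.
by rewrite (v0 x Kx) !mulr0 mul0r.
Qed.

Lemma norm_natB (a b : nat) : (b <= a)%N -> `|(a%:R - b%:R : algC)| = a%:R - b%:R.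
Proof. by move=> le; rewrite -natrB // normr_nat. Qed.

Lemma norm_natB' (a b : nat) : (b <= a)%N -> `|(b%:R - a%:R : algC)| = a%:R - b%:R.
Proof. by move=> le; rewrite distrC norm_natB. Qed.

Lemma Sfun_J gT (G : {group gT}) x y g : g \in G -> Sfun G x (y ^ g) = Sfun G x y.
Proof. by move=> Gg; apply: eq_bigr => i _; rewrite cfunJ. Qed.

Lemma Sfun_Jl gT (G : {group gT}) x y g : g \in G -> Sfun G (x ^ g) y = Sfun G x y.
Proof. by move=> Gg; apply: eq_bigr => i _; rewrite cfunJ. Qed.

Lemma AMZL_E gT (G : {group gT}) :
  AMZL G = (#|G|%:R ^+ 2)^-1 * \sum_(x in G) \sum_(y in G) `|Sfun G x y|.
Proof.
rewrite /AMZL; congr (_ * _).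
have E1 : forall C, C \in classes G ->
   \sum_(C' in classes G) #|C|%:R * #|C'|%:R *
     `| \sum_(i : Iirr G) ('chi[G]_i 1%g) ^+ 2 * 'chi[G]_i (repr C)
                             * ('chi[G]_i (repr C'))^* |
   = #|C|%:R * \sum_(y in G) `|Sfun G (repr C) y|.
  move=> C _.
  rewrite (sum_by_classes (F := fun y => `|Sfun G (repr C) y|)); last first.
    by move=> y g _ Gg /=; rewrite Sfun_J.
  by rewrite mulr_sumr; apply: eq_bigr => C' _; rewrite mulrA.
rewrite (eq_bigr _ E1).
rewrite (sum_by_classes (F := fun x => \sum_(y in G) `|Sfun G x y|)) //.
move=> x g _ Gg /=; apply: eq_bigr => y _; by rewrite Sfun_Jl.
Qed.

Lemma sumO gT (G : {group gT}) x : x \in G ->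
  \sum_(y in G) (#|'C_G[x]%g|%:R *+ (x \in y ^: G)%g : algC) = #|G|%:R.
Proof.
move=> Gx.
rewrite (big_setID (x ^: G)%g) /= (setIidPr (class_subG Gx (subxx _))).
rewrite [X in _ + X]big1 ?addr0; last first.
  by move=> y /setDP[_ nxy]; rewrite class_sym (negPf nxy).
rewrite (eq_bigr (fun _ => #|'C_G[x]%g|%:R)); last by move=> y xy; rewrite class_sym xy.
by rewrite sumr_const -index_cent1 -(Lagrange (subsetIl G 'C[x]%g)) natrM mulr_natr.
Qed.

Lemma Rout gT (G K H : {group gT}) x : [Frobenius G = K ><| H]%g -> abelian K -> abelian H ->
  x \in G -> x \notin K -> \sum_(y in G) `|Sfun G x y| = #|G|%:R.
Proof.
move=> frob cK cH Gx nKx.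
rewrite -(sumO Gx); apply: eq_bigr => y Gy.
by rewrite (Sval _ frob) // (negPf nKx) /= normrMn normr_nat.
Qed.

Lemma RK gT (G K H : {group gT}) x : [Frobenius G = K ><| H]%g -> abelian K -> abelian H ->
  x \in K ->
  \sum_(y in G) `|Sfun G x y| =
    #|x ^: G|%g%:R * `|#|H|%:R ^+ 2 * #|'C_G[x]%g|%:R + #|H|%:R - #|H|%:R ^+ 3|
    + (#|K| - #|x ^: G|%g)%N%:R * (#|H|%:R ^+ 3 - #|H|%:R).
Proof.
move=> frob cK cH Kx.
have [defG _ _ _ _] := Frobenius_context frob.
have [nsKG sHG mulKH nKH tiKH] := sdprod_context defG. have [sKG nKG] := andP nsKG.
have xGK : (x ^: G)%g \subset K by rewrite class_sub_norm.
rewrite (big_setID K) /= (setIidPr sKG).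
rewrite [X in _ + X]big1 ?addr0; last first.
  move=> y /setDP[Gy nKy]; rewrite (Sval _ frob) // Kx (negPf nKy) /=.
  have -> : (x \in y ^: G)%g = false.
    by rewrite class_sym; apply/negP => /(subsetP xGK); rewrite (negPf nKy).
  by rewrite normr0.
rewrite (big_setID (x ^: G)%g) /= (setIidPr xGK).
have hle : (#|H| <= #|H| ^ 3)%N.
  by rewrite -{1}(expn1 #|H|) leq_pexp2l // cardG_gt0.
congr (_ + _).
  rewrite (eq_bigr (fun _ => `|#|H|%:R ^+ 2 * #|'C_G[x]%g|%:R + #|H|%:R - #|H|%:R ^+ 3|)).
    by rewrite sumr_const mulr_natl.
  move=> y xy; have Gy := subsetP sKG y (subsetP xGK y xy).
  by rewrite (Sval _ frob) // Kx (subsetP xGK y xy) class_sym xy mulr1n.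
rewrite (eq_bigr (fun _ => #|H|%:R ^+ 3 - #|H|%:R)).
  rewrite sumr_const mulr_natl; congr (_ *+ _).
  by rewrite cardsD (setIidPr xGK).
move=> y /setDP[Ky nxy]; have Gy := subsetP sKG y Ky.
rewrite (Sval _ frob) // Kx Ky class_sym (negPf nxy) /= mulr0 add0r.
by rewrite -!natrX norm_natB' // natrX.
Qed.

Lemma AMZL_val gT (G K H : {group gT}) : [Frobenius G = K ><| H]%g -> abelian K -> abelian H ->
  AMZL G = 1 + (2 * (#|H|%:R ^+ 2 - 1) / #|H|%:R) * (1 - (#|H|%:R - 1) / #|K|%:R)
               * (1 - 1 / #|K|%:R).
Proof.
move=> frob cK cH.
have [defG ntK ntH _ _] := Frobenius_context frob.
have [nsKG sHG mulKH nKH tiKH] := sdprod_context defG. have [sKG nKG] := andP nsKG.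
have hk : (#|H| <= #|K|)%N.
  apply: leq_trans (leq_pred _); apply: dvdn_leq (Frobenius_dvd_ker1 frob).
  by rewrite -subn1 subn_gt0 cardG_gt1.
have k1 : (1 <= #|K|)%N by rewrite cardG_gt0.
have h1 : (1 <= #|H|)%N by rewrite cardG_gt0.
have cardG : #|G| = (#|K| * #|H|)%N by rewrite (sdprod_card defG).
rewrite AMZL_E.
rewrite (big_setID K) /= (setIidPr sKG).
rewrite [X in _ + X](eq_bigr (fun _ => #|G|%:R)); last first.
  by move=> x /setDP[Gx nKx]; rewrite (Rout frob).
rewrite sumr_const cardsD (setIidPr sKG).
rewrite (big_setD1 1%g) ?group1 //=.
rewrite (RK frob) ?group1 // class1G cards1.
have -> : 'C_G[1%g]%g = G by rewrite cent11T setIT.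
have -> : (#|H|%:R ^+ 2 * #|G|%:R + #|H|%:R - #|H|%:R ^+ 3 : algC)
      = (#|H| ^ 2 * #|G| + #|H|)%N%:R - (#|H| ^ 3)%N%:R by rewrite natrD natrM !natrX.
rewrite norm_natB; last first.
  rewrite cardG; nia.
set Q2 : algC := #|H|%:R * ((#|H|%:R ^+ 2 * #|K|%:R + #|H|%:R) - #|H|%:R ^+ 3)
                 + (#|K|%:R - #|H|%:R) * (#|H|%:R ^+ 3 - #|H|%:R).
rewrite (eq_bigr (fun _ => Q2)); last first.
  move=> x; rewrite !inE => /andP[ntx Kx].
  have cx := centK frob cK Kx ntx.
  have clx : #|(x ^: G)%g| = #|H|.
    have := Lagrange (subsetIl G 'C[x]%g); rewrite index_cent1 cx cardG.
    by move/eqP; rewrite eqn_pmul2l ?cardG_gt0 // => /eqP.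
  rewrite (RK frob) // cx clx.
  have -> : (#|H|%:R ^+ 2 * #|K|%:R + #|H|%:R - #|H|%:R ^+ 3 : algC)
      = (#|H| ^ 2 * #|K| + #|H|)%N%:R - (#|H| ^ 3)%N%:R by rewrite natrD natrM !natrX.
  rewrite norm_natB; last first.
    nia.
  by rewrite natrD natrM !natrX /Q2 natrB.
rewrite sumr_const.
have cK1 : #|K :\ 1%g| = (#|K| - 1)%N by rewrite (cardsD1 1%g K) group1 /= add1n subn1.
rewrite cK1 cardG /Q2.
rewrite -[(_ + _) *+ (#|K| - 1)]mulr_natr -[_ *+ (#|K| * #|H| - #|K|)]mulr_natr.
have kkh : (#|K| <= #|K| * #|H|)%N by nia.
rewrite !natrB //.
rewrite !natrD !natrM.
have kn0 : (#|K|%:R : algC) != 0 by rewrite pnatr_eq0 -lt0n cardG_gt0.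
have hn0 : (#|H|%:R : algC) != 0 by rewrite pnatr_eq0 -lt0n cardG_gt0.
field.
by rewrite kn0 hn0.
Qed.

Lemma centOut gT (G K H : {group gT}) x : [Frobenius G = K ><| H]%g -> abelian K -> abelian H ->
  x \in G -> x \notin K -> #|(x ^: G)%g| = #|K|.
Proof.
move=> frob cK cH Gx nKx.
have [defG _ _ _ _] := Frobenius_context frob.
have cx : #|'C_G[x]%g| = #|H|.
  apply/eqP; rewrite -(eqr_nat algC) -(cardA frob cK cH).
  have := second_orthogonality_relation x Gx; rewrite class_refl mulr1n => <-.
  apply/eqP; apply: eq_bigr => i _.
  case: (boolP (K \subset cfker 'chi[G]_i)) => sK /=.
    have [lin _] := chiA frob cH sK.
    by rewrite -normCK normC_lin_char // expr1n.
  have [_ ->] := chiB frob cK sK; last by [].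
  by rewrite mul0r.
have := Lagrange (subsetIl G 'C[x]%g); rewrite index_cent1 cx -(sdprod_card defG) mulnC.
by move/eqP; rewrite eqn_pmul2r ?cardG_gt0 // => /eqP.
Qed.

Definition Tfun gT (G : {group gT}) (i j : Iirr G) : algC :=
  \sum_(x in G) #|(x ^: G)%g|%:R * 'chi[G]_i x * ('chi[G]_j x)^*.

Lemma AMZA_E gT (G : {group gT}) :
  AMZA G = (#|G|%:R ^+ 2)^-1 * \sum_(i : Iirr G) \sum_(j : Iirr G)
     'chi[G]_i 1%g * 'chi[G]_j 1%g * `|Tfun i j|.
Proof.
rewrite /AMZA; congr (_ * _); apply: eq_bigr => i _; apply: eq_bigr => j _.
congr (_ * `|_|); rewrite /Tfun.
rewrite (sum_by_classes (F := fun x => #|(x ^: G)%g|%:R * 'chi[G]_i x * ('chi[G]_j x)^*)).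
  apply: eq_bigr => C hC; have [_ eC] := repr_classesP hC.
  by rewrite -eC expr2 !mulrA.
by move=> x g Gx Gg /=; rewrite classGidl // !cfunJ.
Qed.

Lemma Dval gT (G : {group gT}) (i j : Iirr G) :
  \sum_(x in G) 'chi[G]_i x * ('chi[G]_j x)^* = #|G|%:R * (i == j)%:R.
Proof.
have := cfdot_irr i j; rewrite cfdotE => <-.
by rewrite mulrA divff ?mul1r // pnatr_eq0 -lt0n cardG_gt0.
Qed.

Lemma classK gT (G K H : {group gT}) x : [Frobenius G = K ><| H]%g -> abelian K ->
  x \in K -> x != 1%g -> #|(x ^: G)%g| = #|H|.
Proof.
move=> frob cK Kx ntx.
have [defG _ _ _ _] := Frobenius_context frob.
have := Lagrange (subsetIl G 'C[x]%g); rewrite index_cent1 (centK frob cK Kx ntx).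
rewrite -(sdprod_card defG).
by move/eqP; rewrite eqn_pmul2l ?cardG_gt0 // => /eqP.
Qed.

Lemma Tform gT (G K H : {group gT}) (i j : Iirr G) :
  [Frobenius G = K ><| H]%g -> abelian K -> abelian H ->
  Tfun i j = (1 - #|H|%:R) * ('chi[G]_i 1%g * ('chi[G]_j 1%g)^*)
    + (#|H|%:R - #|K|%:R) * (\sum_(x in K) 'chi[G]_i x * ('chi[G]_j x)^*)
    + #|K|%:R * (\sum_(x in G) 'chi[G]_i x * ('chi[G]_j x)^*).
Proof.
move=> frob cK cH.
have [defG _ _ _ _] := Frobenius_context frob.
have [nsKG sHG mulKH nKH tiKH] := sdprod_context defG. have [sKG nKG] := andP nsKG.
rewrite /Tfun (big_setID K) /= (setIidPr sKG).
rewrite [X in _ + X](eq_bigr (fun x => #|K|%:R * ('chi[G]_i x * ('chi[G]_j x)^*))); last first.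
  by move=> x /setDP[Gx nKx]; rewrite (centOut frob) // mulrA.
rewrite -mulr_sumr (big_setD1 1%g) ?group1 //= class1G cards1 mul1r.
rewrite (eq_bigr (fun x => #|H|%:R * ('chi[G]_i x * ('chi[G]_j x)^*))); last first.
  by move=> x; rewrite !inE => /andP[ntx Kx]; rewrite (classK frob) // mulrA.
rewrite -mulr_sumr.
rewrite [\sum_(x in G) _](big_setID K) /= (setIidPr sKG).
rewrite [\sum_(x in K) _](big_setD1 1%g) ?group1 //=.
set S1 := \sum_(x in K :\ 1%g) _.
set S2 := \sum_(x in G :\: K) _.
ring.
Qed.

Lemma Pval gT (G K H : {group gT}) (i j : Iirr G) :
  [Frobenius G = K ><| H]%g -> abelian K -> abelian H ->
  \sum_(x in K) 'chi[G]_i x * ('chi[G]_j x)^* =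
  if (K \subset cfker 'chi[G]_i) && (K \subset cfker 'chi[G]_j) then #|K|%:R
  else \sum_(x in G) 'chi[G]_i x * ('chi[G]_j x)^*.
Proof.
move=> frob cK cH.
have [defG _ _ _ _] := Frobenius_context frob.
have [nsKG sHG mulKH nKH tiKH] := sdprod_context defG. have [sKG nKG] := andP nsKG.
case: ifP => [/andP[sKi sKj] | nAA].
  have [_ vi] := chiA frob cH sKi; have [_ vj] := chiA frob cH sKj.
  rewrite (eq_bigr (fun _ => 1)) ?sumr_const //.
  by move=> x Kx; rewrite vi // vj // conjC1 mulr1.
rewrite [RHS](big_setID K) /= (setIidPr sKG) [X in _ = _ + X]big1 ?addr0 //.
move=> x /setDP[Gx nKx].
case: (boolP (K \subset cfker 'chi[G]_i)) => sKi.
  have sKj : ~~ (K \subset cfker 'chi[G]_j) by apply/negP => sKj; rewrite sKi sKj in nAA.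
  by have [_ ->] := chiB frob cK sKj; rewrite // conjC0 mulr0.
by have [_ ->] := chiB frob cK sKi; rewrite // mul0r.
Qed.

Definition gfun (h k : algC) (a b e : bool) : algC :=
  if a then (if b then (if e then k^+2*h - k^+2 + h*k + 1 - h else k^+2 + h - h*k - 1)
             else h^+2*(h-1))
  else (if b then h^+2*(h-1) else (if e then h^+4*(k+1-h) else h^+4*(h-1))).

Lemma gval gT (G K H : {group gT}) (i j : Iirr G) :
  [Frobenius G = K ><| H]%g -> abelian K -> abelian H ->
  'chi[G]_i 1%g * 'chi[G]_j 1%g * `|Tfun i j| =
  gfun #|H|%:R #|K|%:R (K \subset cfker 'chi[G]_i) (K \subset cfker 'chi[G]_j) (i == j).
Proof.
move=> frob cK cH.
have [defG _ _ _ _] := Frobenius_context frob.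
have hk : (#|H| <= #|K|)%N.
  apply: leq_trans (leq_pred _); apply: dvdn_leq (Frobenius_dvd_ker1 frob).
  have [_ ntK _ _ _] := Frobenius_context frob.
  by rewrite -subn1 subn_gt0 cardG_gt1.
have k1 : (1 <= #|K|)%N by rewrite cardG_gt0.
have h1 : (1 <= #|H|)%N by rewrite cardG_gt0.
rewrite (Tform _ _ frob) // (Pval _ _ frob) // Dval -(sdprod_card defG) natrM.
rewrite /gfun.
case: (boolP (K \subset cfker 'chi[G]_i)) => sKi;
  case: (boolP (K \subset cfker 'chi[G]_j)) => sKj /=.
- have [li _] := chiA frob cH sKi; have [lj _] := chiA frob cH sKj.
  rewrite !lin_char1 // conjC1 !mul1r.
  case: (i == j) => /=.
    have -> : ((1 - #|H|%:R) * 1 + (#|H|%:R - #|K|%:R) * #|K|%:R +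
          #|K|%:R * (#|K|%:R * #|H|%:R * 1%:R) : algC)
        = (#|K| * #|K| * #|H| + #|H| * #|K| + 1)%N%:R - (#|K| * #|K| + #|H|)%N%:R.
      by rewrite !natrD !natrM; ring.
    rewrite norm_natB; last by nia.
    by rewrite !natrD !natrM; ring.
  have -> : ((1 - #|H|%:R) * 1 + (#|H|%:R - #|K|%:R) * #|K|%:R +
          #|K|%:R * (#|K|%:R * #|H|%:R * 0%:R) : algC)
        = (#|H| * #|K| + 1)%N%:R - (#|K| * #|K| + #|H|)%N%:R.
    by rewrite !natrD !natrM; ring.
  rewrite norm_natB'; last by nia.
  by rewrite !natrD !natrM; ring.
- have nij : (i == j) = false.
    by apply/eqP => eij; move: sKi; rewrite eij (negPf sKj).
  have [li _] := chiA frob cH sKi; have [-> _] := chiB frob cK sKj.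
  rewrite lin_char1 // nij conjC_nat !mul1r.
  have -> : ((1 - #|H|%:R) * #|H|%:R + (#|H|%:R - #|K|%:R) * (#|K|%:R * #|H|%:R * 0%:R) +
          #|K|%:R * (#|K|%:R * #|H|%:R * 0%:R) : algC)
        = (#|H|)%N%:R - (#|H| * #|H|)%N%:R.
    by rewrite !natrM; ring.
  rewrite norm_natB'; last by nia.
  by rewrite !natrM; ring.
- have nij : (i == j) = false.
    by apply/eqP => eij; rewrite eij sKj in sKi.
  have [lj _] := chiA frob cH sKj; have [-> _] := chiB frob cK sKi.
  rewrite lin_char1 // nij conjC1 !mulr1.
  have -> : ((1 - #|H|%:R) * #|H|%:R + (#|H|%:R - #|K|%:R) * (#|K|%:R * #|H|%:R * 0%:R) +
          #|K|%:R * (#|K|%:R * #|H|%:R * 0%:R) : algC)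
        = (#|H|)%N%:R - (#|H| * #|H|)%N%:R.
    by rewrite !natrM; ring.
  rewrite norm_natB'; last by nia.
  by rewrite !natrM; ring.
- have [-> _] := chiB frob cK sKi; have [-> _] := chiB frob cK sKj.
  rewrite conjC_nat.
  case: (i == j) => /=.
    have -> : ((1 - #|H|%:R) * (#|H|%:R * #|H|%:R) + (#|H|%:R - #|K|%:R) * (#|K|%:R * #|H|%:R * 1%:R) +
          #|K|%:R * (#|K|%:R * #|H|%:R * 1%:R) : algC)
        = (#|H| * #|H| + #|K| * #|H| * #|H|)%N%:R - (#|H| * #|H| * #|H|)%N%:R.
      by rewrite !natrD !natrM; ring.
    rewrite norm_natB; last by nia.
    by rewrite !natrD !natrM; ring.
  have -> : ((1 - #|H|%:R) * (#|H|%:R * #|H|%:R) + (#|H|%:R - #|K|%:R) * (#|K|%:R * #|H|%:R * 0%:R) +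
          #|K|%:R * (#|K|%:R * #|H|%:R * 0%:R) : algC)
        = (#|H| * #|H|)%N%:R - (#|H| * #|H| * #|H|)%N%:R.
    by rewrite !natrM; ring.
  rewrite norm_natB'; last by nia.
  by rewrite !natrM; ring.
Qed.

Lemma double_sum (I : finType) (a : I -> bool) (g : bool -> bool -> bool -> algC) :
  \sum_i \sum_j g (a i) (a j) (i == j) =
  \sum_i (\sum_j g (a i) (a j) false + (g (a i) (a i) true - g (a i) (a i) false)).
Proof.
apply: eq_bigr => i _.
rewrite (bigD1 i) //= eqxx [\sum_j g (a i) (a j) false](bigD1 i) //=.
rewrite (eq_bigr (fun j => g (a i) (a j) false)); last first.
  by move=> j nji; rewrite eq_sym (negPf nji).
set s := \sum_(j | _) _; ring.
Qed.

Lemma sum_bool (I : finType) (a : I -> bool) (F : bool -> algC) :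
  \sum_i F (a i) = (\sum_i (a i)%:R) * F true + (\sum_i (~~ a i)%:R) * F false.
Proof.
rewrite !mulr_suml -big_split /=; apply: eq_bigr => i _.
by case: (a i) => /=; ring.
Qed.

Lemma AMZA_val gT (G K H : {group gT}) : [Frobenius G = K ><| H]%g -> abelian K -> abelian H ->
  AMZA G = 1 + (2 * (#|H|%:R ^+ 2 - 1) / #|H|%:R) * (1 - (#|H|%:R - 1) / #|K|%:R)
               * (1 - 1 / #|K|%:R).
Proof.
move=> frob cK cH.
have [defG _ _ _ _] := Frobenius_context frob.
rewrite AMZA_E.
rewrite (eq_bigr (fun i => \sum_j gfun #|H|%:R #|K|%:R (K \subset cfker 'chi[G]_i)
            (K \subset cfker 'chi[G]_j) (i == j))); last first.
  by move=> i _; apply: eq_bigr => j _; rewrite (gval _ _ frob).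
rewrite (double_sum (fun i : Iirr G => K \subset cfker 'chi[G]_i)
                    (gfun #|H|%:R #|K|%:R)).
rewrite (eq_bigr (fun i => (\sum_j ((K \subset cfker 'chi[G]_j)%:R :algC)) *
                               gfun #|H|%:R #|K|%:R (K \subset cfker 'chi[G]_i) true false
                        + (\sum_j ((~~ (K \subset cfker 'chi[G]_j))%:R : algC)) *
                               gfun #|H|%:R #|K|%:R (K \subset cfker 'chi[G]_i) false false
        + (gfun #|H|%:R #|K|%:R (K \subset cfker 'chi[G]_i) (K \subset cfker 'chi[G]_i) true
           - gfun #|H|%:R #|K|%:R (K \subset cfker 'chi[G]_i) (K \subset cfker 'chi[G]_i) false)));
  last first.
  move=> i _; congr (_ + _).
  exact: (sum_bool (fun j : Iirr G => K \subset cfker 'chi[G]_j)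
             (fun b => gfun #|H|%:R #|K|%:R (K \subset cfker 'chi[G]_i) b false)).
rewrite (sum_bool (fun i : Iirr G => K \subset cfker 'chi[G]_i)
   (fun b => (\sum_j ((K \subset cfker 'chi[G]_j)%:R :algC)) * gfun #|H|%:R #|K|%:R b true false
      + (\sum_j ((~~ (K \subset cfker 'chi[G]_j))%:R : algC)) * gfun #|H|%:R #|K|%:R b false false
      + (gfun #|H|%:R #|K|%:R b b true - gfun #|H|%:R #|K|%:R b b false))).
have nB := cardB frob cK cH.
rewrite (cardA frob cK cH).
set b := \sum_j _ in nB *.
have kn0 : (#|K|%:R : algC) != 0 by rewrite pnatr_eq0 -lt0n cardG_gt0.
have hn0 : (#|H|%:R : algC) != 0 by rewrite pnatr_eq0 -lt0n cardG_gt0.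
have bv : b = (#|K|%:R * #|H|%:R - #|H|%:R) / #|H|%:R ^+ 2.
  rewrite -nB; field; by rewrite hn0.
rewrite bv -(sdprod_card defG) natrM /gfun /=.
field.
by rewrite kn0 hn0.
Qed.

Unset Implicit Arguments.
Unset Strict Implicit.

Theorem theorem2p2 (gT : finGroupType) (G K H : {group gT}) :
  [Frobenius G = K ><| H]%g -> abelian K -> abelian H ->
  let k : algC := #|K|%:R in
  let h : algC := #|H|%:R in
  AMZA G = AMZL G /\
  AMZL G = 1 + (2 * (h ^+ 2 - 1) / h) * (1 - (h - 1) / k) * (1 - 1 / k).
Proof.
move=> frob cK cH k h.
by rewrite (AMZA_val frob cK cH) (AMZL_val frob cK cH).
Qed.
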